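(* Let $(M,\star)$ be a Banach algebra and $e\in M$ a right identity (i.e. $\mu\star e=\mu$ for all $\mu\in M$). Then $Z_t((e\star M)'')=Z_t(M'')\cap(e\star M)''$.
   Context: Left Arens product on $M''$: for $h\in M'$, $\mu,\nu\in M$, $\mathbf m,\mathbf n\in M''$, $\langle h\cdot\mu,\nu\rangle=\langle h,\mu\star\nu\rangle$, $\langle\mathbf n\odot h,\mu\rangle=\langle\mathbf n,h\cdot\mu\rangle$, $\langle\mathbf m\square\mathbf n,h\rangle=\langle\mathbf m,\mathbf n\odot h\rangle$. (Left) topological centre: $Z_t(M'')=\{\mathbf m\in M'':\ \mathbf n\mapsto\mathbf m\square\mathbf n\text{ is weak}^*\text{-continuous on }M''\}$. $e\star M=\{e\star\mu:\mu\in M\}$ is a closed subalgebra; its bidual $(e\star M)''$ is identified with its weak$^*$-closure in $M''$, on which the Arens product of $M''$ restricts to that of $(e\star M)''$, and $Z_t((e\star M)'')$ is the topological centre of the Banach algebra $e\star M$. *)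

(* Defs.v *)
From HB Require Import structures.
From mathcomp Require Import all_boot all_order all_algebra.
From mathcomp Require Import all_classical all_reals all_analysis.
Set Implicit Arguments. Unset Strict Implicit. Unset Printing Implicit Defensive.
Import Order.TTheory GRing.Theory Num.Theory.
Import numFieldNormedType.Exports.
Local Open Scope classical_set_scope.
Local Open Scope ring_scope.

Section Arens.
Variables (K : numFieldType) (M : normedModType K).

Definition banach_algebra_mul (star : M -> M -> M) : Prop :=
  [/\ forall x y z, star x (star y z) = star (star x y) z,
      forall (a : K) x y z, star (a *: x + y) z = a *: star x z + star y z,
      forall (a : K) x y z, star z (a *: x + y) = a *: star z x + star z y
    & forall x y, `|star x y| <= `|x| * `|y| ].

(* A subspace A of M (here always either M itself or e*M) is used as the
   underlying Banach algebra.  A functional on A is represented by a function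
   M -> K; only its values on A matter. *)

Definition is_dual (A : set M) (h : M -> K) : Prop :=
  (forall (a : K) x y, A x -> A y -> h (a *: x + y) = a * h x + h y) /\
  exists r : K, forall x, A x -> `|h x| <= r * `|x|.

Definition is_bidual (A : set M) (m : (M -> K) -> K) : Prop :=
  (forall (a : K) f g, is_dual A f -> is_dual A g ->
       m (fun x => a * f x + g x) = a * m f + m g) /\
  exists C : K, forall f (r : K), is_dual A f -> 0 <= r ->
       (forall x, A x -> `|f x| <= r * `|x|) -> `|m f| <= C * r.

(* Left Arens product:  <h.mu, nu> = <h, mu * nu>,
   <n (.) h, mu> = <n, h.mu>,  <m [] n, h> = <m, n (.) h>. *)
Definition dual_act (star : M -> M -> M) (h : M -> K) (mu : M) : M -> K :=
  fun nu => h (star mu nu).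
Definition bidual_act (star : M -> M -> M) (n : (M -> K) -> K) (h : M -> K)
  : M -> K := fun mu => n (dual_act star h mu).
Definition arens (star : M -> M -> M) (m n : (M -> K) -> K) : (M -> K) -> K :=
  fun h => m (bidual_act star n h).

(* Weak*-continuity (on A'', into A'') of a map Phi : A'' -> A''; the weak*
   topology on A'' is the initial topology of the evaluations at h in A'. *)
Definition weakstar_continuous (A : set M)
    (Phi : ((M -> K) -> K) -> ((M -> K) -> K)) : Prop :=
  forall n0, is_bidual A n0 ->
  forall h, is_dual A h ->
  forall eps : K, 0 < eps ->
  exists k : nat, exists hs : 'I_k -> M -> K, exists2 delta : K, 0 < delta &
    (forall i, is_dual A (hs i)) /\
    (forall n, is_bidual A n ->
       (forall i, `|n (hs i) - n0 (hs i)| < delta) ->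
       `|Phi n h - Phi n0 h| < eps).

Definition top_centre (star : M -> M -> M) (A : set M)
    (m : (M -> K) -> K) : Prop :=
  is_bidual A m /\ weakstar_continuous A (fun n => arens star m n).

Definition left_ideal_by (star : M -> M -> M) (e : M) : set M :=
  [set star e mu | mu in [set: M]].

(* (e*M)'' viewed inside M'' via the adjoint of the restriction map
   M' -> (e*M)' : m in M'' comes from m' in (e*M)'' iff m h = m' h for h in M'. *)
Definition represents (m m' : (M -> K) -> K) : Prop :=
  forall h, is_dual [set: M] h -> m h = m' h.

End Arens.

(* Main.v *)
Require Import Defs.
From HB Require Import structures.
From mathcomp Require Import all_boot all_order all_algebra.
From mathcomp Require Import all_classical all_reals all_analysis.
Import Order.TTheory GRing.Theory Num.Theory.
Import numFieldNormedType.Exports.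
Local Open Scope classical_set_scope.
Local Open Scope ring_scope.

Set Implicit Arguments.
Section Helpers.
Variables (K : numFieldType) (M : completeNormedModType K)
  (star : M -> M -> M) (e : M).
Hypothesis Hba : banach_algebra_mul star.
Hypothesis He : forall mu, star mu e = mu.

Local Notation A := (left_ideal_by star e).

Lemma sassoc x y z : star x (star y z) = star (star x y) z.
Proof. by case: Hba. Qed.
Lemma sDl (a : K) x y z : star (a *: x + y) z = a *: star x z + star y z.
Proof. by case: Hba. Qed.
Lemma sDr (a : K) x y z : star z (a *: x + y) = a *: star z x + star z y.
Proof. by case: Hba. Qed.
Lemma snorm x y : `|star x y| <= `|x| * `|y|.
Proof. by case: Hba. Qed.

Lemma eeP x : star e (star e x) = star e x.
Proof. by rewrite sassoc He. Qed.

Lemma A_P x : A (star e x).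
Proof. by exists x. Qed.

Lemma A_lin (a : K) x y : A x -> A y -> A (a *: x + y).
Proof. by move=> [u _ <-] [v _ <-]; exists (a *: u + v) => //; rewrite sDr. Qed.

Lemma bound_norm (u : K) (r z : K) : `|u| <= r * z -> 0 <= z -> `|u| <= `|r| * z.
Proof.
move=> H z0; have h0 : 0 <= r * z := le_trans (normr_ge0 _) H.
have -> : `|r| * z = `|r * z| by rewrite normrM (ger0_norm z0).
by rewrite (ger0_norm h0).
Qed.

Lemma dualP (f : M -> K) : is_dual A f -> is_dual [set: M] (fun x => f (star e x)).
Proof.
move=> [Hl [r Hr]]; split.
  by move=> a x y _ _; rewrite sDr Hl //; apply: A_P.
exists (`|r| * `|e|) => x _.
have := Hr _ (A_P x) => /bound_norm /(_ (normr_ge0 _)) Hb0.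
apply: (le_trans Hb0); rewrite -mulrA; apply: ler_wpM2l => //; exact: snorm.
Qed.

Lemma dualMA (f : M -> K) : is_dual [set: M] f -> is_dual A f.
Proof.
move=> [Hl [r Hr]]; split; first by move=> a x y _ _; apply: Hl.
by exists r => x _; apply: Hr.
Qed.

Lemma bidualAM (n : (M -> K) -> K) : is_bidual A n -> is_bidual [set: M] n.
Proof.
move=> [Hl [C HC]]; split.
  by move=> a f g Hf Hg; apply: Hl; apply: dualMA.
exists C => f r Hf r0 Hb; apply: HC => //; first exact: dualMA.
by move=> x _; apply: Hb.
Qed.

Lemma bidualP (n : (M -> K) -> K) : is_bidual [set: M] n ->
  is_bidual A (fun f => n (fun x => f (star e x))).
Proof.
move=> [Hl [C HC]]; split.
  by move=> a f g Hf Hg /=; apply: Hl; apply: dualP.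
exists (C * `|e|) => f r Hf r0 Hb.
have : `|n (fun x => f (star e x))| <= C * (r * `|e|).
  apply: HC; first exact: dualP.
    by apply: mulr_ge0.
  move=> x _; apply: (le_trans (Hb _ (A_P x))).
  by rewrite -mulrA; apply: ler_wpM2l => //; apply: snorm.
by rewrite [r * _]mulrC mulrA.
Qed.

Lemma dual_act_dual (H : M -> K) mu : is_dual [set: M] H ->
  is_dual [set: M] (dual_act star H mu).
Proof.
move=> [Hl [r Hr]]; split.
  by move=> a x y _ _; rewrite /dual_act sDr Hl.
exists (`|r| * `|mu|) => x _; rewrite /dual_act.
have := Hr (star mu x) Logic.I => /bound_norm /(_ (normr_ge0 _)) Hb0.
apply: (le_trans Hb0); rewrite -mulrA; apply: ler_wpM2l => //; exact: snorm.
Qed.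

Lemma G_dual (n : (M -> K) -> K) (H : M -> K) :
  is_bidual [set: M] n -> is_dual [set: M] H ->
  is_dual [set: M] (bidual_act star n H).
Proof.
move=> [Hl [C HC]] HH; split.
  move=> a x y _ _; rewrite /bidual_act.
  rewrite (_ : dual_act star H (a *: x + y) =
     fun nu => a * dual_act star H x nu + dual_act star H y nu).
    by apply: Hl; apply: dual_act_dual.
  apply: funext => nu; rewrite /dual_act sDl.
  by case: HH => Hl' _; apply: Hl'.
case: (HH) => _ [r Hr].
exists (C * `|r|) => mu _; rewrite /bidual_act -mulrA.
apply: HC; first exact: dual_act_dual.
  by apply: mulr_ge0.
move=> x _; rewrite /dual_act.
have := Hr (star mu x) Logic.I => /bound_norm /(_ (normr_ge0 _)) H0.
apply: (le_trans H0); rewrite -mulrA; apply: ler_wpM2l => //; exact: snorm.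
Qed.

Lemma bidual_zero (m : (M -> K) -> K) (f g : M -> K) :
  is_bidual A m -> is_dual A f -> is_dual A g ->
  (forall x, A x -> f x = g x) -> m f = m g.
Proof.
move=> [Hl [C HC]] Hf Hg Hfg.
have Hd : is_dual A (fun x => -1 * g x + f x).
  split.
    move=> a x y Ax Ay; rewrite !Hfg //; last exact: A_lin.
    by rewrite mulN1r addNr mulN1r addNr mulN1r addNr mulr0 addr0.
  by exists 0 => x Ax; rewrite Hfg // mulN1r addNr normr0 mul0r.
have := HC _ 0 Hd (lexx 0).
rewrite mulr0 normr_le0 Hl // mulN1r addrC subr_eq0 => /(_ _)/eqP -> //.
by move=> x Ax; rewrite Hfg // mulN1r addNr normr0 mul0r.
Qed.

End Helpers.

Theorem proposition5 (K : numFieldType) (M : completeNormedModType K)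
    (star : M -> M -> M) (e : M) :
  banach_algebra_mul star ->
  (forall mu, star mu e = mu) ->
  forall m : (M -> K) -> K, is_bidual [set: M] m ->
    ((exists m', top_centre star (left_ideal_by star e) m' /\ represents m m')
     <->
     (top_centre star [set: M] m /\
      exists m', is_bidual (left_ideal_by star e) m' /\ represents m m')).
Proof.
move=> Hba He m Hm; split.
- move=> [m' [[Hm' Hc] Hrep]]; split; last by exists m'.
  split => // n0 Hn0 H HH eps Heps.
  have [k [hs [delta Hd [Hhs Hcont]]]] :=
    Hc _ (bidualP e Hba Hn0) H (dualMA star e HH) eps Heps.
  exists k, (fun i x => hs i (star e x)), delta => //; split.
    by move=> i; exact: (dualP Hba (Hhs i)).
  move=> n Hn Hcl.
  have key : forall n, is_bidual [set: M] n -> arens star m n H =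
     arens star m' (fun f => n (fun x => f (star e x))) H.
    move=> n1 Hn1; rewrite /arens Hrep; last exact: (G_dual Hba).
    congr m'; apply: funext => mu; rewrite /bidual_act /dual_act.
    by congr n1; apply: funext => x; rewrite (sassoc Hba) He.
  rewrite /= !key //; apply: Hcont; first exact: (bidualP e Hba).
  exact: Hcl.
- move=> [[_ Hc] [m'' [Hm'' Hrep]]].
  exists (fun f => m (fun x => f (star e x))); split.
    split; first exact: (bidualP e Hba).
    move=> n0 Hn0 h Hh eps Heps.
    have [k [hs [delta Hd [Hhs Hcont]]]] :=
      Hc _ (bidualAM Hn0) _ (dualP Hba Hh) eps Heps.
    exists k, hs, delta => //; split.
      by move=> i; apply: (dualMA star e).
    move=> n Hn Hcl.
    have key : forall n, arens star (fun f => m (fun x => f (star e x))) n h =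
       arens star m n (fun x => h (star e x)).
      move=> n1; rewrite /arens /bidual_act /dual_act.
      congr m; apply: funext => mu; congr n1; apply: funext => x.
      by rewrite (sassoc Hba).
    rewrite /= !key; exact: (Hcont n (bidualAM Hn) Hcl).
  move=> h Hh; rewrite (Hrep h Hh) (Hrep _ (dualP Hba (dualMA star e Hh))).
  apply: (bidual_zero Hba Hm'' (dualMA star e Hh) (dualMA star e (dualP Hba (dualMA star e Hh)))).
  by move=> x [u _ <-]; rewrite (eeP e Hba He).
Qed.
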